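(* Let $G$ be a graph with a clique cutset $C$, and let $V(G)\setminus C$ be partitioned into two sets $V_1,V_2$ such that there are no edges between $V_1$ and $V_2$. If $G[C\cup V_1]$ is perfect, then $G$ is not minimally non-perfectly divisible.
   Context: All graphs are finite and simple. For $S\subseteq V(G)$, $G[S]$ is the subgraph induced by $S$. $\omega(G)$ is the number of vertices in a largest clique of $G$ and $\chi(G)$ the chromatic number. A graph $G$ is perfect if $\chi(H)=\omega(H)$ for every induced subgraph $H$ of $G$. A partition $(A,B)$ of $V(G)$ is good if $G[A]$ is perfect and $\omega(G[B])<\omega(G)$. A graph $G$ is perfectly divisible if every induced subgraph $H$ of $G$ with at least one edge admits a good partition (of $V(H)$). A graph is minimally non-perfectly divisible if it is not perfectly divisible but each of its proper induced subgraphs is perfectly divisible. A set $C\subseteq V(G)$ is a clique cutset if $C$ induces a clique in $G$ and $G-C$ is disconnected. *)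

(* Defs.v *)
(* A simple graph is a symmetric irreflexive relation e on a
   finType T; induced subgraphs G[S] are given by vertex sets S : {set T}. *)
From mathcomp Require Import all_boot.
Set Implicit Arguments. Unset Strict Implicit. Unset Printing Implicit Defensive.

Section Graphs.
Variables (T : finType) (e : rel T).

Definition simple_graph : Prop := symmetric e /\ irreflexive e.

Definition is_clique (K : {set T}) : bool :=
  [forall x in K, forall y in K, (x != y) ==> e x y].

Definition omega (S : {set T}) : nat :=
  \max_(K : {set T} | (K \subset S) && is_clique K) #|K|.

Definition colorable (S : {set T}) (k : nat) : bool :=
  [exists f : {ffun T -> 'I_(#|T|.+1)},
     [forall x in S, f x < k] &&
     [forall x in S, forall y in S, e x y ==> (f x != f y)]].

(* chi(G[S]) : least k such that G[S] is k-colourable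
   (G[S] is always #|T|-colourable) *)
Definition chi (S : {set T}) : nat :=
  \big[minn/#|T|]_(k < #|T|.+1 | colorable S k) k.

Definition perfect (S : {set T}) : Prop :=
  forall H : {set T}, H \subset S -> chi H = omega H.

Definition has_edge (S : {set T}) : Prop :=
  exists x y, [/\ x \in S, y \in S & e x y].

Definition good_partition (S A B : {set T}) : Prop :=
  [/\ A :|: B = S, A :&: B = set0, perfect A & omega B < omega S].

Definition perfectly_divisible (S : {set T}) : Prop :=
  forall H : {set T}, H \subset S -> has_edge H ->
    exists A B : {set T}, good_partition H A B.

Definition minimally_non_pd : Prop :=
  ~ perfectly_divisible [set: T] /\
  forall H : {set T}, H \proper [set: T] -> perfectly_divisible H.

Definition clique_cutset (C : {set T}) : Prop :=
  is_clique C /\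
  exists x y, [/\ x \notin C, y \notin C &
    ~~ connect [rel u v | [&& e u v, u \notin C & v \notin C]] x y].

End Graphs.

(* Main.v *)
Require Import Defs.
From mathcomp Require Import all_boot.
Set Implicit Arguments. Unset Strict Implicit. Unset Printing Implicit Defensive.

Section Aux.
Variables (T : finType) (e : rel T).
Hypothesis (esym : symmetric e) (eirr : irreflexive e).

Lemma omega_mono (A B : {set T}) : A \subset B -> omega e A <= omega e B.
Proof.
move=> AB; apply/bigmax_leqP => K /andP[KA cl]; apply: leq_bigmax_cond.
by rewrite (subset_trans KA AB) cl.
Qed.

Lemma omega_le_T (A : {set T}) : omega e A <= #|T|.
Proof. by apply/bigmax_leqP => K _; apply: max_card. Qed.

Lemma omega_ge1 (A : {set T}) x : x \in A -> 0 < omega e A.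
Proof.
move=> xA; have : #|[set x]| <= omega e A.
  apply: leq_bigmax_cond.
  rewrite sub1set xA /=; apply/forallP => u; apply/implyP => /set1P ->.
  by apply/forallP => v; apply/implyP => /set1P ->; rewrite eqxx.
by rewrite cards1.
Qed.

Lemma omega0 : omega e set0 = 0.
Proof.
apply/eqP; rewrite -leqn0; apply/bigmax_leqP => K /andP[K0 _].
by rewrite subset0 in K0; rewrite (eqP K0) cards0.
Qed.

Lemma colorable_mono (S : {set T}) a b : colorable e S a -> a <= b -> colorable e S b.
Proof.
move=> /existsP[f /andP[/forallP lt pr]] ab; apply/existsP; exists f.
rewrite pr andbT; apply/forallP => x; apply/implyP => xS.
exact: leq_trans (implyP (lt x) xS) ab.
Qed.

Lemma colorableT (S : {set T}) : colorable e S #|T|.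
Proof.
apply/existsP; exists [ffun x => widen_ord (leqnSn _) (enum_rank x)].
apply/andP; split; apply/forallP => x; apply/implyP => _; rewrite ?ffunE //=.
apply/forallP => y; apply/implyP => _; apply/implyP => exy; rewrite !ffunE.
apply/negP => /eqP [] /val_inj /enum_rank_inj xy.
by rewrite xy eirr in exy.
Qed.

Lemma chi_le (S : {set T}) k : colorable e S k -> k < #|T|.+1 -> chi e S <= k.
Proof.
move=> ck hk; rewrite /chi.
have : Ordinal hk \in index_enum 'I_#|T|.+1 by rewrite mem_index_enum.
elim: (index_enum _) => [//|j r IH]; rewrite big_cons inE => /orP[/eqP <-|jr].
  by rewrite ck geq_minl.
case: ifP => _; last exact: IH.
exact: leq_trans (geq_minr _ _) (IH jr).
Qed.

Lemma chi_col (S : {set T}) : colorable e S (chi e S).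
Proof.
rewrite /chi; apply: (big_ind (colorable e S)); first exact: colorableT.
  by move=> a b ca cb; rewrite /minn; case: ltnP.
by [].
Qed.

Lemma card_ltk n k (A : {set 'I_n}) : (forall c, c \in A -> c < k) -> #|A| <= k.
Proof.
move=> hA; rewrite cardE -(size_map val) -(size_iota 0 k).
apply: uniq_leq_size; first by rewrite (map_inj_uniq val_inj) enum_uniq.
move=> x /mapP[c]; rewrite mem_enum => cA ->; rewrite mem_iota /=.
exact: hA.
Qed.

Lemma omega_le_chi (S : {set T}) : omega e S <= chi e S.
Proof.
apply/bigmax_leqP => K /andP[KS cl].
have /existsP[f /andP[/forallP lt /forallP pr]] := chi_col S.
have inj : {in K &, injective f}.
  move=> x y xK yK fxy; apply/eqP; apply/negPn/negP => nxy.
  have := forallP (implyP (forallP cl x) xK) y.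
  rewrite yK nxy /= => exy.
  have := implyP (forallP (implyP (pr x) (subsetP KS x xK)) y) (subsetP KS y yK).
  by rewrite exy fxy eqxx.
rewrite -(card_in_imset inj); apply: card_ltk => c /imsetP[x xK ->].
exact: (implyP (lt x) (subsetP KS x xK)).
Qed.


Lemma glue (X Y H : {set T}) :
  is_clique e (X :&: Y) ->
  (forall x y, x \in X -> x \notin Y -> y \in Y -> y \notin X -> ~~ e x y) ->
  H \subset X :|: Y -> chi e (H :&: X) <= omega e H ->
  chi e (H :&: Y) <= omega e H -> chi e H = omega e H.
Proof.
move=> cl cross HXY hX hY.
set k := omega e H.
have cX := colorable_mono (chi_col (H :&: X)) hX.
have cY := colorable_mono (chi_col (H :&: Y)) hY.
apply/eqP; rewrite eqn_leq omega_le_chi andbT.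
apply: chi_le; last by rewrite ltnS omega_le_T.
case/existsP: cX => f /andP[/forallP fl /forallP fp].
case/existsP: cY => g /andP[/forallP gl /forallP gp].
set Q := H :&: X :&: Y.
have QX : forall u, u \in Q -> u \in H :&: X.
  by move=> u; rewrite !inE => /andP[/andP[-> ->] _].
have QY : forall u, u \in Q -> u \in H :&: Y.
  by move=> u; rewrite !inE => /andP[/andP[-> _] ->].
have QC : forall u, u \in Q -> u \in X :&: Y.
  by move=> u; rewrite !inE => /andP[/andP[_ ->] ->].
have fQ : {in Q &, injective f}.
  move=> u v uQ vQ fuv; apply/eqP; apply/negPn/negP => nuv.
  have := forallP (implyP (forallP cl u) (QC _ uQ)) v.
  rewrite (QC _ vQ) nuv /= => euv.
  have := implyP (forallP (implyP (fp u) (QX _ uQ)) v) (QX _ vQ).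
  by rewrite euv fuv eqxx.
have gQ : {in Q &, injective g}.
  move=> u v uQ vQ fuv; apply/eqP; apply/negPn/negP => nuv.
  have := forallP (implyP (forallP cl u) (QC _ uQ)) v.
  rewrite (QC _ vQ) nuv /= => euv.
  have := implyP (forallP (implyP (gp u) (QY _ uQ)) v) (QY _ vQ).
  by rewrite euv fuv eqxx.
set D := [set c : 'I_#|T|.+1 | c < k].
have gQD : g @: Q \subset D.
  apply/subsetP => c /imsetP[u uQ ->]; rewrite inE.
  exact: (implyP (gl u) (QY _ uQ)).
have fQD : f @: Q \subset D.
  apply/subsetP => c /imsetP[u uQ ->]; rewrite inE.
  exact: (implyP (fl u) (QX _ uQ)).
set A := D :\: (g @: Q).
set B := D :\: (f @: Q).
have cardAB : #|A| = #|B|.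
  by rewrite !cardsD (setIidPr gQD) (setIidPr fQD) !card_in_imset.
pose pi c := if [pick u in Q | g u == c] is Some u then f u
             else nth ord0 (enum B) (index c (enum A)).
have piQ : forall q, q \in Q -> pi (g q) = f q.
  move=> q qQ; rewrite /pi; case: pickP => [u /andP[uQ /eqP gu]|/(_ q)].
    by rewrite (gQ _ _ uQ qQ gu).
  by rewrite qQ eqxx.
have piA : forall c, c \in A ->
    pi c = nth ord0 (enum B) (index c (enum A)) /\ pi c \in B.
  move=> c cA; have ei : index c (enum A) < size (enum B).
    by rewrite -cardE -cardAB cardE index_mem mem_enum.
  have -> : pi c = nth ord0 (enum B) (index c (enum A)).
    rewrite /pi; case: pickP => [u /andP[uQ /eqP gu]|//].
    by move: cA; rewrite !inE -gu imset_f // andbF.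
  by split => //; rewrite -mem_enum mem_nth.
have Dsplit : forall c, c \in D -> (exists2 q, q \in Q & c = g q) \/ c \in A.
  move=> c cD; case: (boolP (c \in g @: Q)) => [/imsetP[q qQ ->]|ncQ].
    by left; exists q.
  by right; rewrite !inE ncQ; rewrite inE in cD.
have piD : forall c, c \in D -> pi c \in D.
  move=> c /Dsplit [[q qQ ->]|cA]; first by rewrite piQ // (subsetP fQD) ?imset_f.
  by have [_] := piA c cA; rewrite inE => /andP[].
have piinj : {in D &, injective pi}.
  move=> c1 c2 /Dsplit [[q1 q1Q ->]|c1A] /Dsplit [[q2 q2Q ->]|c2A].
  - by rewrite !piQ // => /fQ -> .
  - have [_] := piA _ c2A; rewrite piQ // => + fpi; rewrite -fpi inE imset_f //.
  - have [_] := piA _ c1A; rewrite piQ // => + fpi; rewrite fpi inE imset_f //.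
  - have [-> _] := piA _ c1A; have [-> _] := piA _ c2A.
    have bnd : forall c, c \in A -> index c (enum A) < size (enum B).
      by move=> c cA; rewrite -cardE -cardAB cardE index_mem mem_enum.
    move/eqP; rewrite nth_uniq ?enum_uniq ?bnd //.
    move=> /eqP ei; rewrite -(nth_index ord0 (s := enum A) (x := c1)) ?mem_enum //.
    by rewrite ei nth_index ?mem_enum.
apply/existsP; exists [ffun v => if v \in X then f v else pi (g v)].
have HY : forall v, v \in H -> v \notin X -> v \in H :&: Y.
  move=> v vH vX; rewrite inE vH /=.
  by have := subsetP HXY v vH; rewrite inE (negbTE vX).
have key : forall v, v \in H :&: Y -> (if v \in X then f v else pi (g v)) = pi (g v).
  move=> v; rewrite inE => /andP[vH vY]; case: ifP => // vX.
  by rewrite piQ // !inE vH vX vY.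
apply/andP; split.
  apply/forallP => v; apply/implyP => vH; rewrite ffunE.
  case: ifP => vX; first by apply: (implyP (fl v)); rewrite inE vH vX.
  have := piD (g v); rewrite !inE; apply.
  by apply: (implyP (gl v)); apply: HY; rewrite ?vX.
apply/forallP => x; apply/implyP => xH; apply/forallP => y; apply/implyP => yH.
apply/implyP => exy; rewrite !ffunE.
case: (boolP ((x \in X) && (y \in X))) => [/andP[xX yX]|nXX].
  rewrite xX yX.
  have xHX : x \in H :&: X by rewrite inE xH xX.
  have yHX : y \in H :&: X by rewrite inE yH yX.
  exact: (implyP (implyP (forallP (implyP (fp x) xHX) y) yHX) exy).
have [xY yY] : x \in H :&: Y /\ y \in H :&: Y.
  case: (boolP (x \in X)) => xX.
    have yX : y \notin X by move: nXX; rewrite xX.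
    have yY := HY y yH yX; split => //; rewrite inE xH /=.
    apply/negPn/negP => xnY; move: (cross x y xX xnY) exy.
    by rewrite (subsetP (subsetIr H Y) y yY) yX => /(_ isT isT) /negbTE ->.
  have xY := HY x xH xX; split => //; rewrite inE yH /=.
  apply/negPn/negP => ynY.
  have yX : y \in X by have := subsetP HXY y yH; rewrite inE (negbTE ynY) orbF.
  move: (cross y x yX ynY) exy.
  by rewrite (subsetP (subsetIr H Y) x xY) xX esym => /(_ isT isT) /negbTE ->.
rewrite (key _ xY) (key _ yY); apply/negP => /eqP /piinj.
have gxD : g x \in D by rewrite inE; exact: (implyP (gl x) xY).
have gyD : g y \in D by rewrite inE; exact: (implyP (gl y) yY).
move=> /(_ gxD gyD) /eqP; apply/negP.
exact: (implyP (implyP (forallP (implyP (gp x) xY) y) yY) exy).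
Qed.


Lemma chi_edgeless (S : {set T}) :
  (forall x y, x \in S -> y \in S -> ~~ e x y) -> chi e S <= omega e S.
Proof.
move=> noe; case: (set_0Vmem S) => [->|[x xS]].
  rewrite omega0; apply: chi_le => //.
  apply/existsP; exists [ffun _ => ord0].
  by apply/andP; split; apply/forallP => v; rewrite inE.
apply: leq_trans (omega_ge1 xS); apply: chi_le; last first.
  by rewrite ltnS (leq_trans _ (max_card [set x])) // cards1.
apply/existsP; exists [ffun _ => ord0].
apply/andP; split; apply/forallP => v; apply/implyP => vS; rewrite ?ffunE //.
apply/forallP => w; apply/implyP => wS; apply/implyP => evw.
by have := noe v w vS wS; rewrite evw.
Qed.

End Aux.

Theorem lemma4 (T : finType) (e : rel T) (C V1 V2 : {set T}) :
  simple_graph e ->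
  clique_cutset e C ->
  V1 != set0 -> V2 != set0 ->
  C :|: V1 :|: V2 = [set: T] ->
  [disjoint C & V1] -> [disjoint C & V2] -> [disjoint V1 & V2] ->
  (forall x y, x \in V1 -> y \in V2 -> ~~ e x y) ->
  perfect e (C :|: V1) ->
  ~ minimally_non_pd e.
Proof.
move=> [esym eirr] [clC _] nV1 nV2 cov dCV1 dCV2 dV12 noe pX [npd minpd].
apply: npd => H _ Hedge.
case: (eqVneq H setT) => [->{H Hedge}|neq]; last first.
  have prop : H \proper setT by rewrite properT.
  exact: (minpd H prop H (subxx H) Hedge).
set X := C :|: V1. set Y := C :|: V2.
have [v1 v1V1] := set0Pn _ nV1.
have v1Y : v1 \notin Y.
  by rewrite !inE negb_or (disjointFl dCV1 v1V1) (disjointFr dV12 v1V1).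
have clXY : is_clique e (X :&: Y).
  apply/forallP => x; apply/implyP => xXY; apply/forallP => y; apply/implyP => yXY.
  have inC : forall z, z \in X :&: Y -> z \in C.
    move=> z; rewrite !inE => /andP[/orP[->//|z1] /orP[->//|z2]].
    by rewrite (disjointFr dV12 z1) in z2.
  exact: (implyP (forallP (implyP (forallP clC x) (inC _ xXY)) y) (inC _ yXY)).
have cross : forall x y, x \in X -> x \notin Y -> y \in Y -> y \notin X -> ~~ e x y.
  move=> x y; rewrite !inE => /orP[->//|x1] /norP[_ _] /orP[->//|y2] _.
  exact: noe.
have HXY : forall H : {set T}, H \subset X :|: Y.
  move=> H; apply/subsetP => v _; have : v \in [set: T] by [].
  by rewrite -cov !inE; case/orP=> [/orP[]|] ->; rewrite ?orbT.
have V1Y : forall v, v \in V1 -> v \in Y = false.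
  by move=> v vV1; rewrite !inE (disjointFl dCV1 vV1) (disjointFr dV12 vV1).
have chiX : forall H : {set T}, chi e (H :&: X) <= omega e H.
  move=> H; rewrite (pX _ (subsetIr _ _)); apply: omega_mono; exact: subsetIl.
case: (boolP [exists x, exists y, [&& x \in Y, y \in Y & e x y]]) => [hE|nE].
  have propY : Y \proper setT.
    rewrite properT; apply/eqP => YT; by move: v1Y; rewrite YT inE.
  have edgeY : has_edge e Y.
    case/existsP: hE => x /existsP[y /and3P[xY yY exy]]; by exists x, y.
  have [A2 [B2 [AB AiB pA2 omB]]] := minpd Y propY Y (subxx Y) edgeY.
  exists (A2 :|: V1), B2; split.
  - apply/setP => v; rewrite inE.
    have Yv : v \in Y -> (v \in A2) || (v \in B2) by rewrite -AB inE.
    have := subsetP (HXY [set: T]) v (in_setT v); rewrite inE => /orP[|vY].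
      rewrite inE => /orP[vC|vV]; last by rewrite !inE vV orbT.
      have : v \in Y by rewrite inE vC.
      by move/Yv; rewrite !inE => /orP[->|->]; rewrite ?orbT.
    by move/Yv: vY; rewrite !inE => /orP[->|->]; rewrite ?orbT.
  - apply/setP => v; rewrite !inE; apply/negbTE; apply/negP => /andP[/orP[vA|vV] vB].
      have : v \in A2 :&: B2 by rewrite inE vA vB.
      by rewrite AiB inE.
    have : v \in Y by rewrite -AB inE vB orbT.
    by rewrite V1Y.
  - move=> H HA; apply: glue clXY cross (HXY H) (chiX H) _ => //.
    rewrite (pA2 _); first by apply: omega_mono; exact: subsetIl.
    apply/subsetP => v; rewrite inE => /andP[vH vY].
    have := subsetP HA v vH; rewrite inE => /orP[//|vV1].
    by rewrite V1Y in vY.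
  - apply: (leq_trans omB); exact: omega_mono (subsetT Y).
exists [set: T], set0; split.
- by rewrite setU0.
- by rewrite setI0.
- move=> H _; apply: glue clXY cross (HXY H) (chiX H) _ => //.
  apply: (leq_trans (chi_edgeless _)); last exact: omega_mono (subsetIl _ _).
  move=> x y /setIP[_ xY] /setIP[_ yY]; apply/negP => exy.
  by move/existsP: nE; apply; exists x; apply/existsP; exists y; rewrite xY yY exy.
- by rewrite omega0 (omega_ge1 e (in_setT v1)).
Qed.
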